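(* Let $\mathcal{A}$ be a unital algebra over a field $F$ with $\operatorname{char}(F)\neq2$, having an idempotent $e\neq 0,1$, and write $e^{\perp}=1-e$. Assume that for every $x\in\mathcal{A}$: if $exe\cdot e\mathcal{A}e^{\perp}=\{0\}=e^{\perp}\mathcal{A}e\cdot exe$ then $exe=0$, and if $e\mathcal{A}e^{\perp}\cdot e^{\perp}xe^{\perp}=\{0\}=e^{\perp}xe^{\perp}\cdot e^{\perp}\mathcal{A}e$ then $e^{\perp}xe^{\perp}=0$. Then $\operatorname{JCent}(\mathcal{A})=\operatorname{Cent}(\mathcal{A})$.
   Context: $x\circ y=xy+yx$. $\operatorname{JCent}(\mathcal{A})$: linear $f:\mathcal{A}\to\mathcal{A}$ with $f(x\circ y)=f(x)\circ y$ for all $x,y$. $\operatorname{Cent}(\mathcal{A})$: linear $f$ with $f(xy)=f(x)y=xf(y)$ for all $x,y$. *)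

(* Defs.v *)
From HB Require Import structures.
From mathcomp Require Import all_boot all_order all_algebra.
Set Implicit Arguments. Unset Strict Implicit. Unset Printing Implicit Defensive.
Import GRing.Theory.
Local Open Scope ring_scope.

Definition jprod (A : pzRingType) (x y : A) : A := x * y + y * x.

Definition is_jcent (F : pzRingType) (A : algType F) (f : {linear A -> A}) : Prop :=
  forall x y : A, f (jprod x y) = jprod (f x) y.

Definition is_cent (F : pzRingType) (A : algType F) (f : {linear A -> A}) : Prop :=
  forall x y : A, f (x * y) = f x * y /\ f (x * y) = x * f y.

(* Main.v *)
Require Import Defs.
From HB Require Import structures.
From mathcomp Require Import all_boot all_order all_algebra.
Import GRing.Theory.
Local Open Scope ring_scope.
Lemma rearr (V : zmodType) (p a g q d b : V) :
  p + a + g + q = p + d + b + q -> a - b = d - g.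
Proof.
rewrite -!addrA => /addrI; rewrite !addrA => /addIr H.
by apply/eqP; rewrite subr_eq addrAC -H addrK.
Qed.
Lemma double_inj (F : fieldType) (A : algType F) (x : A) :
  2%N \notin [pchar F] -> x *+ 2 = 0 -> x = 0.
Proof.
move=> h2 H.
have /eqP : (2%:R : F) *: x = 0 by rewrite scaler_nat.
rewrite scaler_eq0 => /orP [h|/eqP //]; exfalso; move: h2.
by rewrite inE /= h.
Qed.

Theorem proposition3p7 (F : fieldType) (A : algType F) (e : A)
  (hchar : 2%N \notin [pchar F])
  (he_idem : e * e = e) (he0 : e != 0) (he1 : e != 1)
  (hleft : forall x : A,
      (forall a : A, (e * x * e) * (e * a * (1 - e)) = 0) ->
      (forall a : A, ((1 - e) * a * e) * (e * x * e) = 0) ->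
      e * x * e = 0)
  (hright : forall x : A,
      (forall a : A, (e * a * (1 - e)) * ((1 - e) * x * (1 - e)) = 0) ->
      (forall a : A, ((1 - e) * x * (1 - e)) * ((1 - e) * a * e) = 0) ->
      (1 - e) * x * (1 - e) = 0) :
  forall f : {linear A -> A}, is_jcent f <-> is_cent f.
Proof.
move=> f; split; last first.
  by move=> hc x y; rewrite /jprod linearD /=; case: (hc x y) => -> _; case: (hc y x) => _ ->.
move=> hj.
set c := f 1.
have hf2 : forall y, f y *+ 2 = c * y + y * c.
  by move=> y; rewrite -[c * y + y * c]/(jprod (f 1) y) -hj /jprod mul1r mulr1 -mulr2n raddfMn.
have Z : forall y x, (c * y - y * c) * x = x * (c * y - y * c).
  move=> y x.
  have H := congr1 (fun t => t *+ 2) (hj x y).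
  move: H => /=; rewrite hf2 /jprod mulrnDl -mulrnAl -mulrnAr hf2.
  rewrite mulrBl mulrBr !mulrDl !mulrDr !mulrA !addrA; exact: rearr.
have ee : forall x, e * (e * x) = e * x by move=> x; rewrite mulrA he_idem.
have ef : forall x, e * ((1 - e) * x) = 0.
  by move=> x; rewrite mulrA mulrBr mulr1 he_idem subrr mul0r.
have fe : forall x, (1 - e) * (e * x) = 0.
  by move=> x; rewrite mulrA mulrBl mul1r he_idem subrr mul0r.
have ffi : (1 - e) * (1 - e) = 1 - e by rewrite mulrBr mulr1 mulrBl mul1r he_idem subrr subr0.
have ff : forall x, (1 - e) * ((1 - e) * x) = (1 - e) * x by move=> x; rewrite mulrA ffi.
have hce : c * e = e * c.
  set de := c * e - e * c.
  have hde : de = e * de + e * de.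
    by rewrite -{1}(Z e e) /de mulrBl mulrBr -!mulrA he_idem ee addrA subrK.
  have gen : forall d, d = e * d + e * d -> d = 0.
    move=> d hd; have hed : e * d = 0.
      have := congr1 (fun t => e * t) hd; rewrite /= mulrDr !ee.
      by move/(congr1 (fun t => t - e * d)); rewrite /= subrr addrK.
    by rewrite hd hed addr0.
  by apply/eqP; rewrite -subr_eq0 -/de (gen _ hde).
have hz : forall y, c * y - y * c = 0.
  move=> y.
  have Zey : forall a, e * ((c * y - y * c) * a) = a * (e * (c * y - y * c)).
    move=> a; rewrite mulrA; have -> : e * (c * y - y * c) = c * (e * y) - e * y * c.
      by rewrite mulrBr !mulrA hce.
    exact: Z.
  have Zy := Z y.
  move: (c * y - y * c) Zy Zey => z Zy Zey.
  have zc : forall x w, x * (z * w) = z * (x * w).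
    by move=> x w; rewrite mulrA -Zy mulrA.
  have K1 : forall a, z * (e * (a * (1 - e))) = 0.
    by move=> a; rewrite -zc Zey -mulrA fe mulr0.
  have K2 : forall a, z * ((1 - e) * (a * e)) = 0.
    move=> a; rewrite Zy -!mulrA.
    have := Zey ((1 - e) * a); rewrite zc ef mulr0 => /esym.
    by rewrite -!mulrA.
  have h1 : e * z * e = 0.
    by apply: hleft => a; rewrite -!mulrA ?he_idem ?ee ?zc ?ee ?he_idem ?K1 ?K2.
  have h2 : (1 - e) * z * (1 - e) = 0.
    by apply: hright => a; rewrite -!mulrA ?ffi ?ff ?zc ?ff ?ffi ?K1 ?K2.
  have -> : z = e * z * e + (1 - e) * z * (1 - e).
    by rewrite -!mulrA !zc he_idem ffi -mulrDr addrC subrK mulr1.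
  by rewrite h1 h2 addr0.
have cy : forall y, c * y = y * c by move=> y; apply/eqP; rewrite -subr_eq0 hz.
have fc : forall y, f y = c * y.
  move=> y; apply/eqP; rewrite -subr_eq0; apply/eqP/double_inj => //.
  by rewrite mulrnBl hf2 -(cy y) mulr2n subrr.
by move=> x y; rewrite !fc mulrA; split => //; rewrite cy -mulrA.
Qed.
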